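(* Let $A$ be a connected skew diagram with $\mathbf w=(w_1,\dots,w_r)$, let $n_1$ be the number of nonempty rows of $A$, and let $\mathbf w^1=\mathbf w(A\setminus V_1)$. Suppose that for some $3\le\ell\le r$ the partition $\sigma^1:=(n_1)\cup\mathbf w^1$ has the form $\sigma^1=(n_1,\bar w_2,\dots,\bar w_\ell,w_{\ell+1},\dots,w_r)$ with $\bar w_k\le w_k$ for $k=2,\dots,\ell$ and $0<\bar w_\ell<w_\ell$. Suppose moreover there are integers $2\le i<j\le\ell$ with $\bar w_i\ge\bar w_j+2$ and $w_j>\bar w_j$. Then $\mathrm{supp}(A)\subsetneq[\mathbf w,\mathbf n]$.
   Context: For $\mu\subseteq\lambda$, the skew diagram $A=\lambda/\mu$ is the set of boxes of $\lambda$ not in $\mu$ (English notation). $V_1$ is the set of rightmost boxes of the nonempty rows of $A$ (so $A\setminus V_1$ is a skew diagram). For a skew diagram $B$, $\mathbf w(B)$ is the partition of its column lengths sorted decreasingly and $\mathbf n(B)$ the conjugate of the partition of its row lengths sorted decreasingly; $\mathbf w=\mathbf w(A)$, $\mathbf n=\mathbf n(A)$. $\alpha\cup\beta$ denotes the partition consisting of all parts of $\alpha$ and $\beta$ sorted decreasingly. $[\mathbf w,\mathbf n]$ is the dominance interval, and $\mathrm{supp}(A)=\{\nu':c^\lambda_{\mu\nu}>0\}$ where $s_{\lambda/\mu}=\sum_\nu c^\lambda_{\mu\nu}s_\nu$. *)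

(* Defs.v *)
From mathcomp Require Import all_boot.
Set Implicit Arguments. Unset Strict Implicit. Unset Printing Implicit Defensive.

Definition is_part (p : seq nat) : bool := sorted geq p && all (fun x => 0 < x) p.

Definition maxl (s : seq nat) : nat := foldr maxn 0 s.

Definition conj (p : seq nat) : seq nat :=
  [seq count (fun x => j < x) p | j <- iota 0 (maxl p)].

Definition skew_shape (la mu : seq nat) : Prop :=
  is_part la /\ is_part mu /\ forall i, nth 0 mu i <= nth 0 la i.

(* box (i,j) (row i, column j, 0-based, English notation) lies in lambda/mu *)
Definition in_skew (la mu : seq nat) (i j : nat) : bool :=
  (nth 0 mu i <= j) && (j < nth 0 la i).

Definition skew_adj (la mu : seq nat)
    (x y : 'I_(size la) * 'I_(maxl la)) : bool :=
  [&& in_skew la mu x.1 x.2, in_skew la mu y.1 y.2 &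
      ((x.1 == y.1 :> nat) && ((x.2.+1 == y.2 :> nat) || (y.2.+1 == x.2 :> nat)))
   || ((x.2 == y.2 :> nat) && ((x.1.+1 == y.1 :> nat) || (y.1.+1 == x.1 :> nat)))].

Definition connected_skew (la mu : seq nat) : Prop :=
  (exists i j, in_skew la mu i j) /\
  forall x y : 'I_(size la) * 'I_(maxl la),
    in_skew la mu x.1 x.2 -> in_skew la mu y.1 y.2 ->
    connect (@skew_adj la mu) x y.

Definition col_len (la mu : seq nat) (j : nat) : nat :=
  count (fun i => in_skew la mu i j) (iota 0 (size la)).
Definition row_len (la mu : seq nat) (i : nat) : nat := nth 0 la i - nth 0 mu i.

Definition wvec (la mu : seq nat) : seq nat :=
  sort geq (filter (fun x => 0 < x) [seq col_len la mu j | j <- iota 0 (maxl la)]).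

Definition nvec (la mu : seq nat) : seq nat :=
  conj (sort geq (filter (fun x => 0 < x) [seq row_len la mu i | i <- iota 0 (size la)])).

Definition nrows (la mu : seq nat) : nat :=
  count (fun i => nth 0 mu i < nth 0 la i) (iota 0 (size la)).

(* A \ V_1 = remV1 la / mu : remove the rightmost box of every nonempty row *)
Definition remV1 (la mu : seq nat) : seq nat :=
  [seq if nth 0 mu i < nth 0 la i then (nth 0 la i).-1 else nth 0 la i
  | i <- iota 0 (size la)].

(* 1-based indexing of sequences *)
Definition nth1 (s : seq nat) (k : nat) : nat := nth 0 s k.-1.

Definition dominated (a b : seq nat) : Prop :=
  forall k, sumn (take k a) <= sumn (take k b).

Definition in_interval (la mu rho : seq nat) : Prop :=
  is_part rho /\ sumn rho = sumn (wvec la mu) /\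
  dominated (wvec la mu) rho /\ dominated rho (nvec la mu).

Definition read_word (la mu : seq nat) (T : nat -> nat -> nat) : seq nat :=
  flatten [seq rev [seq T i j | j <- iota (nth 0 mu i) (row_len la mu i)]
          | i <- iota 0 (size la)].

Definition LR_tableau (la mu nu : seq nat) (T : nat -> nat -> nat) : Prop :=
  (forall i j, in_skew la mu i j -> in_skew la mu i j.+1 -> T i j <= T i j.+1) /\
  (forall i j, in_skew la mu i j -> in_skew la mu i.+1 j -> T i j < T i.+1 j) /\
  all (fun x => (0 < x) && (x <= size nu)) (read_word la mu T) /\
  (forall k, count_mem k.+1 (read_word la mu T) = nth 0 nu k) /\
  (forall n k, count_mem k.+2 (take n (read_word la mu T))
               <= count_mem k.+1 (take n (read_word la mu T))).

(* c^lambda_{mu nu} > 0, by the Littlewood-Richardson rule *)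
Definition LR_pos (la mu nu : seq nat) : Prop := exists T, LR_tableau la mu nu T.

(* supp(A) = { nu' : c^lambda_{mu nu} > 0 } *)
Definition in_supp (la mu rho : seq nat) : Prop :=
  exists nu, is_part nu /\ LR_pos la mu nu /\ rho = conj nu.

(* Main.v *)
Require Import Defs.
From mathcomp Require Import all_boot zify.
Set Implicit Arguments. Unset Strict Implicit. Unset Printing Implicit Defensive.

Lemma count_big (T : Type) (P : pred T) s : count P s = \sum_(x <- s) P x.
Proof. by elim: s => [|x s IH]; rewrite ?big_nil ?big_cons //= IH. Qed.

Lemma sumn_big (T : Type) (f : T -> nat) s : sumn (map f s) = \sum_(x <- s) f x.
Proof. by elim: s => [|x s IH]; rewrite ?big_nil ?big_cons //= IH. Qed.

Lemma count_lt_iota x K : \sum_(j <- iota 0 K) (j < x) = minn x K.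
Proof.
elim: K => [|K IH]; first by rewrite big_nil minn0.
rewrite -addn1 iotaD big_cat /= big_cons big_nil IH.
case: ltnP => h /=; lia.
Qed.

Lemma maxl_ge x p : x \in p -> x <= maxl p.
Proof.
elim: p => [|y p IH] //=; rewrite inE => /orP[/eqP ->|/IH h]; lia.
Qed.

Lemma maxl_le p B : (forall x, x \in p -> x <= B) -> maxl p <= B.
Proof.
elim: p => [|y p IH] //= H.
rewrite geq_max H ?mem_head // IH // => x xp; apply: H; by rewrite inE xp orbT.
Qed.

Lemma maxl_has j p : j < maxl p -> has (fun x => j < x) p.
Proof.
elim: p => [|y p IH] //=; rewrite leq_max => /orP[->//|/IH ->]; by rewrite orbT.
Qed.

Lemma conj_take p k : sumn (take k (conj p)) = \sum_(x <- p) minn x k.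
Proof.
rewrite /conj -map_take take_iota sumn_big.
under eq_bigr => j _ do rewrite count_big.
rewrite exchange_big /=. apply: eq_big_seq => x xp.
rewrite count_lt_iota. have := maxl_ge xp. lia.
Qed.

Lemma sumn_conj p : sumn (conj p) = sumn p.
Proof.
have -> : conj p = take (maxl p) (conj p) by rewrite take_oversize // size_map size_iota.
rewrite conj_take sumnE; apply: eq_big_seq => x xp; have := maxl_ge xp; lia.
Qed.

Lemma geq_trans : transitive geq.
Proof. move=> a b c /= h1 h2; apply: leq_trans h2 h1. Qed.
Lemma geq_refl : reflexive geq.
Proof. by move=> a /=. Qed.
Lemma geq_tot : total geq.
Proof. by move=> a b /=; apply: leq_total. Qed.
Lemma geq_anti : antisymmetric geq.
Proof. move=> a b /andP[h1 h2]; apply/eqP; rewrite eqn_leq; apply/andP; split; [exact: h2|exact: h1]. Qed.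

Lemma sorted_map_iota (f : nat -> nat) a n :
  (forall j, f j.+1 <= f j) -> sorted geq (map f (iota a n)).
Proof.
move=> H; apply/(sortedP 0) => q; rewrite size_map size_iota => hq.
rewrite !(nth_map 0) ?size_iota ?nth_iota //; try lia.
by rewrite /= addnS; apply: H.
Qed.

Lemma conj_part p : is_part (conj p).
Proof.
apply/andP; split.
- apply: sorted_map_iota => q; apply: sub_count => x /=; lia.
- apply/allP => y /mapP[q]; rewrite mem_iota => /andP[_ hq] ->.
  rewrite -has_count; exact: maxl_has.
Qed.

Lemma conj_nth0 p : all (fun x => 0 < x) p -> nth 0 (conj p) 0 = size p.
Proof.
case: p => [|x p] //= /andP[hx hp].
rewrite (nth_map 0) ?size_iota; last by rewrite leq_max hx.
rewrite nth_iota; last by rewrite leq_max hx.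
rewrite /= hx add1n; congr S; apply/eqP; rewrite -all_count; exact: hp.
Qed.

Lemma take_perm_sub (f : nat -> nat) (t s : seq nat) k :
  uniq s -> perm_eq t (map f s) ->
  exists J, [/\ uniq J, {subset J <= s}, size J <= k &
                sumn (take k t) = \sum_(j <- J) f j].
Proof.
elim: t s k => [|x t IH] s k us pt.
  by exists [::]; rewrite big_nil; case: k.
case: k => [|k]; first by exists [::]; rewrite big_nil.
have xin : x \in map f s by rewrite -(perm_mem pt) mem_head.
case/mapP: xin => y ys ex; subst x.
have pt' : perm_eq t (map f (rem y s)).
  have H := perm_map f (perm_to_rem ys).
  by rewrite -(perm_cons (f y)); apply: perm_trans pt H.
have [J [uJ sJ szJ eJ]] := IH _ k (rem_uniq y us) pt'.
exists (y :: J); split => //=.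
- rewrite uJ andbT; apply/negP => /sJ; by rewrite mem_rem_uniqF.
- move=> z; rewrite inE => /orP [/eqP -> // | /sJ]; apply: mem_rem.
- by rewrite big_cons eJ.
Qed.

Lemma wvec_bound la mu k B :
  (forall J, uniq J -> {subset J <= iota 0 (maxl la)} -> size J <= k ->
     \sum_(j <- J) col_len la mu j <= B) ->
  sumn (take k (wvec la mu)) <= B.
Proof.
move=> H; rewrite /wvec.
have pt : perm_eq (sort geq (filter (fun x => 0 < x)
             [seq col_len la mu j | j <- iota 0 (maxl la)]))
   (map (col_len la mu) (filter (fun j => 0 < col_len la mu j) (iota 0 (maxl la)))).
  by rewrite perm_sort filter_map.
have [J [uJ sJ szJ ->]] := take_perm_sub k (filter_uniq _ (iota_uniq 0 _)) pt.
apply: H => // z /sJ; rewrite mem_filter => /andP[] //.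
Qed.

Lemma sumn_wvec0 la mu :
  sumn (wvec la mu) = \sum_(j <- iota 0 (maxl la)) col_len la mu j.
Proof.
rewrite /wvec sumnE (perm_big _ (permEl (perm_sort _ _))) big_filter big_mkcond /= big_map.
by apply: eq_bigr => j _; case: ifP => //; case: (col_len _ _ _).
Qed.

Lemma nvec_take la mu k :
  sumn (take k (nvec la mu)) = \sum_(i <- iota 0 (size la)) minn (row_len la mu i) k.
Proof.
rewrite /nvec conj_take (perm_big _ (permEl (perm_sort _ _))) big_filter big_mkcond /= big_map.
by apply: eq_bigr => i _; case: ifP => // /negbT; rewrite -leqNgt leqn0 => /eqP ->; rewrite min0n.
Qed.

Lemma sum_le1 (T : eqType) (P : pred T) s :
  uniq s -> (forall x y, x \in s -> y \in s -> P x -> P y -> x = y) ->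
  \sum_(x <- s) P x <= 1.
Proof.
elim: s => [|x s IH] /=; first by rewrite big_nil.
case/andP=> xs us H; rewrite big_cons.
case Px: (P x) => /=.
- rewrite big1_seq ?addn0 // => y /andP[_ ys].
  case Py: (P y) => //.
  have ys' : y \in x :: s by rewrite inE ys orbT.
  have e := H x y (mem_head _ _) ys' Px Py.
  by move: xs; rewrite e ys.
- rewrite add0n; apply: IH => // a b ha hb; apply: H; by rewrite inE ?ha ?hb orbT.
Qed.

Lemma sum_eq1 (L : seq nat) x : uniq L -> x \in L -> \sum_(v <- L) (x == v) = 1.
Proof.
move=> uL xL; rewrite -count_big.
rewrite (eq_count (a2 := pred1 x)); last by move=> v /=; rewrite eq_sym.
by rewrite count_uniq_mem // xL.
Qed.

Lemma sub_sum (J s : seq nat) (F : nat -> nat) :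
  uniq J -> uniq s -> {subset J <= s} -> \sum_(j <- J) F j <= \sum_(j <- s) F j.
Proof.
move=> uJ us sJ.
have pe : perm_eq J (filter (mem J) s).
  apply: uniq_perm => //; first exact: filter_uniq.
  move=> z; rewrite mem_filter /=; case h: (z \in J) => //=; by rewrite sJ.
rewrite (perm_big _ pe) big_filter (bigID (mem J) xpredT) /=.
exact: leq_addr.
Qed.

Lemma colbound (nI nJ k : nat) (inS : nat -> nat -> bool) (lab : nat -> nat -> nat)
    (L J : seq nat) :
  uniq L -> uniq J -> {subset J <= iota 0 nJ} -> size J <= k ->
  (forall i i' j, i < nI -> i' < nI -> inS i j -> inS i' j -> lab i j = lab i' j -> i = i') ->
  (forall i j, i < nI -> inS i j -> lab i j \in L) ->
  \sum_(j <- J) count (fun i => inS i j) (iota 0 nI) <=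
  \sum_(v <- L) minn (\sum_(i <- iota 0 nI) \sum_(j <- iota 0 nJ)
                           (inS i j && (lab i j == v))) k.
Proof.
move=> uL uJ sJ szJ inj labL.
have E : forall j, count (fun i => inS i j) (iota 0 nI) =
   \sum_(v <- L) \sum_(i <- iota 0 nI) (inS i j && (lab i j == v)).
  move=> j; rewrite count_big exchange_big /=.
  apply: eq_big_seq => i; rewrite mem_iota => /andP[_ hi].
  case h: (inS i j) => /=; last by rewrite big1.
  by rewrite sum_eq1 // labL.
under eq_bigr => j _ do rewrite E.
rewrite exchange_big /=; apply: leq_sum => v _.
rewrite leq_min; apply/andP; split.
- rewrite [X in _ <= X]exchange_big /=; apply: sub_sum => //; exact: iota_uniq.
- apply: leq_trans szJ; rewrite -sum1_size; apply: leq_sum => j _.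
  apply: sum_le1; first exact: iota_uniq.
  move=> x y; rewrite !mem_iota => /andP[_ hx] /andP[_ hy] /= /andP[h1 /eqP e1].
  move=> /andP[h2 /eqP e2].
  apply: (inj x y j) => //; by rewrite e1 e2.
Qed.

Lemma row_conv (m L X : nat) (P : nat -> bool) :
  m <= L -> L <= X ->
  \sum_(j <- iota 0 X) ((m <= j) && (j < L) && P j) = \sum_(j <- iota m (L - m)) P j.
Proof.
move=> h1 h2.
have e : X = m + (L - m) + (X - L) by lia.
rewrite e !iotaD !big_cat /= add0n.
rewrite big1_seq; last first.
  move=> j /andP[_]; rewrite mem_iota add0n => /andP[_ hj].
  by have -> : (m <= j) = false by lia.
rewrite [X in _ + _ + X]big1_seq; last first.
  move=> j /andP[_]; rewrite mem_iota => /andP[hj _].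
  have -> : (j < L) = false by lia.
  by rewrite andbF.
rewrite add0n addn0; apply: eq_big_seq => j; rewrite mem_iota => /andP[ha hb].
have -> : (m <= j) = true by [].
by have -> : (j < L) = true by lia.
Qed.

Definition lattice (s : seq nat) :=
  forall n k, count_mem k.+2 (take n s) <= count_mem k.+1 (take n s).

Lemma lattice_cat_l s t : lattice (s ++ t) -> lattice s.
Proof.
move=> H n k; case: (ltnP n (size s)) => h.
- by have := H n k; rewrite take_cat h.
- rewrite take_oversize //; by have := H (size s) k; rewrite take_size_cat.
Qed.

Lemma lattice_full s k : lattice s -> count_mem k.+2 s <= count_mem k.+1 s.
Proof. by move=> H; have := H (size s) k; rewrite take_size. Qed.

Lemma sorted_split (b : seq nat) v : sorted geq b ->
  b = filter (fun x => v <= x) b ++ filter (fun x => x < v) b.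
Proof.
elim: b => [|x b IH] //= sb.
have sb' := path_sorted sb.
have al := order_path_min geq_trans sb.
case: (leqP v x) => h /=.
- by rewrite -IH.
- have -> : [seq y <- b | v <= y] = [::].
    rewrite (@eq_in_filter _ _ pred0) ?filter_pred0 // => y yb.
    have := allP al y yb; rewrite /=; lia.
  rewrite cat0s; congr cons; symmetry.
  by apply/all_filterP/allP => y yb; have := allP al y yb; rewrite /=; lia.
Qed.

Lemma sum_count_range M b : all (fun x => (0 < x) && (x <= M)) b ->
  \sum_(1 <= v < M.+1) count_mem v b = size b.
Proof.
elim: b => [|x b IH] /=.
  by rewrite big1 // => v _.
case/andP=> hx hb.
rewrite big_split /= IH //.
have -> : \sum_(1 <= i < M.+1) (x == i) = 1.
  rewrite /index_iota subn1 /=; apply: sum_eq1; first exact: iota_uniq.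
  rewrite mem_iota; lia.
by rewrite add1n.
Qed.

Lemma lattice_bound (bs : seq (seq nat)) k M :
  all (sorted geq) bs -> lattice (flatten bs) ->
  all (fun x => (0 < x) && (x <= M)) (flatten bs) ->
  \sum_(1 <= v < M.+1) minn (count_mem v (flatten bs)) k <=
  \sum_(b <- bs) minn (size b) k.
Proof.
elim/last_ind: bs => [|bs b IH].
  by move=> _ _ _; rewrite big_nil big1 // => v _; rewrite min0n.
rewrite all_rcons flatten_rcons -cats1 big_cat big_seq1 /= all_cat.
case/andP=> sb sbs lat /andP[rW rb].
set W := flatten bs in lat rW IH *.
have latW := lattice_cat_l lat.
have E : forall v, minn (count_mem v (W ++ b)) k = minn (count_mem v W) k +
       (minn (count_mem v W + count_mem v b) k - minn (count_mem v W) k).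
  move=> v; rewrite count_cat; lia.
under eq_bigr => v _ do rewrite E.
rewrite big_split /=; apply: leq_add; first exact: IH.
rewrite leq_min; apply/andP; split.
- rewrite -(sum_count_range rb); apply: leq_sum => v _; move: (count_mem v W) (count_mem v b) => c d; lia.
- pose D m := if m is 0 then k else minn (count_mem m W) k.
  suff S : forall m, m <= M ->
     \sum_(1 <= v < m.+1) (minn (count_mem v W + count_mem v b) k - minn (count_mem v W) k)
       + D m <= k.
    by apply: leq_trans (S M (leqnn M)); apply: leq_addr.
  elim => [|m IHm] hm; first by rewrite big_geq.
  rewrite big_nat_recr //=.
  have IHm' := IHm (ltnW hm).
  suff : minn (count_mem m.+1 W + count_mem m.+1 b) k <= D m.
    move: IHm'; set S0 := \sum_(1 <= i < m.+1) _; set Dm := D m.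
    move: (count_mem m.+1 W) (count_mem m.+1 b) => c d; lia.
  case: m hm IHm IHm' => [|m] hm _ _ /=; first lia.
  rewrite (sorted_split m.+2 sb) catA in lat.
  have := lattice_full m (lattice_cat_l lat).
  rewrite !count_cat !count_filter.
  have -> : count (predI (pred1 m.+2) (fun x => m.+2 <= x)) b = count_mem m.+2 b.
    by apply: eq_count => x; rewrite /= andb_idr // => /eqP ->.
  have -> : count (predI (pred1 m.+1) (fun x => m.+2 <= x)) b = 0.
    rewrite (eq_count (a2 := pred0)) ?count_pred0 // => x /=.
    by apply/negbTE/andP => [[/eqP -> ]]; rewrite ltnn.
  move: (count_mem m.+2 W) (count_mem m.+2 b) (count_mem m.+1 W) => x y z; lia.
Qed.

Lemma count_gt0_mem (s : seq nat) x : (0 < count_mem x s) = (x \in s).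
Proof. by rewrite -has_count has_pred1. Qed.

Lemma lattice_down s u v : lattice s -> u \in s -> 0 < v <= u -> v \in s.
Proof.
move=> lat us /andP[hv hvu].
suff H : forall d, d < u -> 0 < count_mem (u - d) s.
  have := H (u - v) ltac:(lia).
  by rewrite (_ : u - (u - v) = v) ?count_gt0_mem //; lia.
elim => [|d IH] hd; first by rewrite subn0 count_gt0_mem.
have e1 : u - d = (u - d.+2).+2 by lia.
have e2 : u - d.+1 = (u - d.+2).+1 by lia.
have := lattice_full (u - d.+2) lat; rewrite -e1 -e2.
have := IH (ltnW hd); lia.
Qed.

Lemma head_first (bs : seq (seq nat)) W v :
  all (sorted geq) bs -> lattice (W ++ flatten bs) ->
  all (fun x => 0 < x) (W ++ flatten bs) ->
  v \notin W -> v \in flatten bs -> exists2 b, b \in bs & head 0 b = v.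
Proof.
elim: bs W => [|b bs IH] W //= /andP[sb sbs] lat pos vW.
rewrite mem_cat; case vb: (v \in b) => /= vbs.
- case: b vb sb lat pos => [|h b'] //= vb sb lat pos.
  case: (eqVneq h v) => [<-|hv]; first by exists (h :: b'); rewrite ?mem_head.
  exfalso.
  move: vb; rewrite inE eq_sym (negbTE hv) /= => vb'.
  have al := order_path_min geq_trans sb.
  have vh : v <= h by have := allP al v vb'.
  have vpos : 0 < v by apply: (allP pos); rewrite mem_cat /= inE mem_cat vb' !orbT.
  have e : W ++ h :: b' ++ flatten bs = (W ++ [:: h]) ++ (b' ++ flatten bs)
    by rewrite -catA.
  rewrite e in lat.
  have lat1 := lattice_cat_l lat.
  have eh : h = (h - 2).+2 by lia.
  have := lattice_full (h - 2) lat1; rewrite -eh.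
  have eh1 : (h - 2).+1 = h.-1 by lia.
  rewrite eh1 !count_cat /= eqxx.
  have -> : (h == h.-1) = false by apply/negbTE; lia.
  rewrite /= !addn0 addn1 => /(leq_trans (ltn0Sn _)); rewrite count_gt0_mem => hW.
  have latW := lattice_cat_l lat1.
  have := lattice_down latW hW (v := v) ltac:(lia).
  by rewrite (negbTE vW).
- have [b' b'in hb'] := IH (W ++ b) sbs ltac:(by rewrite -catA) ltac:(by rewrite -catA)
     ltac:(by rewrite mem_cat (negbTE vW) vb) vbs.
  by exists b' => //; rewrite inE b'in orbT.
Qed.

Lemma nth_le_maxl p i : nth 0 p i <= maxl p.
Proof.
case: (ltnP i (size p)) => h; first by apply: maxl_ge; exact: mem_nth.
by rewrite nth_default.
Qed.

Lemma nth_part_mono p i i' : is_part p -> i <= i' -> nth 0 p i' <= nth 0 p i.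
Proof.
case/andP => sp _ h; case: (ltnP i' (size p)) => h'.
- apply: (sorted_leq_nth geq_trans geq_refl 0 sp) => //; rewrite inE /=; lia.
- by rewrite (nth_default _ h').
Qed.

Lemma in_skew_size la mu i j : in_skew la mu i j -> i < size la.
Proof.
rewrite /in_skew => /andP[_ h]; case: (ltnP i (size la)) => // h'.
by rewrite nth_default in h.
Qed.

Lemma in_skew_maxl la mu i j : in_skew la mu i j -> j < maxl la.
Proof. rewrite /in_skew => /andP[_ h]; exact: leq_trans h (nth_le_maxl _ _). Qed.

Lemma in_skew_between la mu i i'' i' j : skew_shape la mu ->
  i <= i'' <= i' -> in_skew la mu i j -> in_skew la mu i' j -> in_skew la mu i'' j.
Proof.
move=> [pla [pmu _]] /andP[h1 h2] /andP[a1 a2] /andP[b1 b2].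
have := nth_part_mono pmu h1; have := nth_part_mono pla h2.
rewrite /in_skew; lia.
Qed.

Lemma col_strict_gen la mu (T : nat -> nat -> nat) : skew_shape la mu ->
  (forall i j, in_skew la mu i j -> in_skew la mu i.+1 j -> T i j < T i.+1 j) ->
  forall d i j, in_skew la mu i j -> in_skew la mu (i + d.+1) j -> T i j < T (i + d.+1) j.
Proof.
move=> sk H; elim => [|d IH] i j h1 h2; first by rewrite addn1 in h2 *; apply: H.
have hm : in_skew la mu (i + d.+1) j.
  by apply: (in_skew_between sk _ h1 h2); lia.
apply: leq_trans (IH _ _ h1 hm) _.
rewrite (addnS i d.+1); apply: ltnW; apply: H => //; by rewrite -addnS.
Qed.

Lemma col_inj la mu (T : nat -> nat -> nat) : skew_shape la mu ->
  (forall i j, in_skew la mu i j -> in_skew la mu i.+1 j -> T i j < T i.+1 j) ->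
  forall i i' j, in_skew la mu i j -> in_skew la mu i' j -> T i j = T i' j -> i = i'.
Proof.
move=> sk H i i' j h1 h2 e.
case: (ltngtP i i') => // hl.
- have ed : i' = i + (i' - i - 1).+1 by lia.
  rewrite ed in h2 e; have := col_strict_gen sk H h1 h2; rewrite e ltnn //.
- have ed : i = i' + (i - i' - 1).+1 by lia.
  rewrite ed in h1 e; have := col_strict_gen sk H h2 h1; rewrite e ltnn //.
Qed.

Definition rowseq la mu (T : nat -> nat -> nat) i :=
  [seq T i j | j <- iota (nth 0 mu i) (row_len la mu i)].
Definition blocks la mu T := [seq rev (rowseq la mu T i) | i <- iota 0 (size la)].
Lemma read_wordE la mu T : read_word la mu T = flatten (blocks la mu T).
Proof. by []. Qed.

Lemma row_sumP la mu i X (P : nat -> bool) : nth 0 mu i <= nth 0 la i -> nth 0 la i <= X ->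
  \sum_(j <- iota 0 X) (in_skew la mu i j && P j) =
  \sum_(j <- iota (nth 0 mu i) (row_len la mu i)) P j.
Proof. move=> h1 h2; exact: row_conv. Qed.

Lemma row_sum la mu i X : nth 0 mu i <= nth 0 la i -> nth 0 la i <= X ->
  \sum_(j <- iota 0 X) in_skew la mu i j = row_len la mu i.
Proof.
move=> h1 h2.
have := row_sumP (fun _ => true) h1 h2.
under eq_bigr => j _ do rewrite andbT.
move=> ->; by rewrite sum1_size size_iota.
Qed.

Definition cells la mu := \sum_(i <- iota 0 (size la)) row_len la mu i.

Lemma sumn_wvec la mu : (forall i, nth 0 mu i <= nth 0 la i) ->
  sumn (wvec la mu) = cells la mu.
Proof.
move=> H; rewrite sumn_wvec0.
under eq_bigr => j _ do rewrite /col_len count_big.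
rewrite exchange_big /=; apply: eq_bigr => i _; apply: row_sum => //.
exact: nth_le_maxl.
Qed.

Lemma count_word la mu T v : (forall i, nth 0 mu i <= nth 0 la i) ->
  count_mem v (read_word la mu T) =
  \sum_(i <- iota 0 (size la)) \sum_(j <- iota 0 (maxl la)) (in_skew la mu i j && (T i j == v)).
Proof.
move=> H; rewrite read_wordE count_flatten sumn_big big_map.
apply: eq_bigr => i _; rewrite count_rev count_map count_big.
rewrite (row_sumP (fun j => T i j == v)) //; exact: nth_le_maxl.
Qed.

Lemma size_word la mu T : size (read_word la mu T) = cells la mu.
Proof.
rewrite read_wordE size_flatten /shape -map_comp sumn_big.
by apply: eq_bigr => i _ /=; rewrite size_rev size_map size_iota.
Qed.

Lemma mem_word la mu T i j : in_skew la mu i j -> T i j \in read_word la mu T.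
Proof.
move=> h; rewrite read_wordE; apply/flattenP.
exists (rev (rowseq la mu T i)).
  apply/mapP; exists i => //; rewrite mem_iota /=; exact: in_skew_size h.
rewrite mem_rev; apply/mapP; exists j => //; rewrite mem_iota.
move: h; rewrite /in_skew /row_len; lia.
Qed.

Lemma blocks_sorted la mu T :
  (forall i j, in_skew la mu i j -> in_skew la mu i j.+1 -> T i j <= T i j.+1) ->
  all (sorted geq) (blocks la mu T).
Proof.
move=> H; apply/allP => b /mapP[i _ ->].
rewrite rev_sorted; apply/(sortedP 0) => q; rewrite size_map size_iota => hq.
rewrite !(nth_map 0) ?size_iota ?nth_iota //; try lia.
rewrite /= addnS; apply: H; rewrite /in_skew; move: hq; rewrite /row_len; lia.
Qed.

Lemma sum_nu (nu word : seq nat) (F : nat -> nat) :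
  (forall k, count_mem k.+1 word = nth 0 nu k) ->
  \sum_(x <- nu) F x = \sum_(1 <= v < (size nu).+1) F (count_mem v word).
Proof.
move=> H; rewrite (big_nth 0) big_add1 /=; apply: eq_bigr => k _; by rewrite H.
Qed.

Lemma supp_in_interval la mu rho : skew_shape la mu -> in_supp la mu rho ->
  in_interval la mu rho.
Proof.
move=> sk; case=> nu [pnu [[T [Hrow [Hcol [Hall [Hcnt Hlat]]]]] ->]].
have sk3 := sk.2.2.
have Hw : sumn (wvec la mu) = cells la mu by apply: sumn_wvec.
set word := read_word la mu T in Hall Hcnt Hlat.
split; first exact: conj_part.
split.
  rewrite sumn_conj Hw -(size_word la mu T) sumnE (sum_nu id Hcnt).
  exact: sum_count_range.
split.
- move=> k; rewrite conj_take; apply: wvec_bound => J uJ sJ szJ.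
  apply: leq_trans (colbound (nI := size la) (nJ := maxl la) (lab := T)
                      (L := iota 1 (size nu)) (iota_uniq _ _) uJ sJ szJ _ _) _.
  + move=> i i' j _ _; exact: (col_inj sk Hcol).
  + move=> i j _ h; have := allP Hall _ (mem_word T h); rewrite mem_iota; lia.
  + rewrite (sum_nu (fun x => minn x k) Hcnt) /index_iota subn1 /=.
    apply: leq_sum => v _; by rewrite count_word.
- move=> k; rewrite conj_take nvec_take (sum_nu (fun x => minn x k) Hcnt).
  have := lattice_bound k (blocks_sorted Hrow) Hlat Hall.
  rewrite -/(read_word la mu T) -/word => /leq_trans; apply.
  rewrite /blocks big_map; apply: leq_sum => i _.
  by rewrite size_rev size_map size_iota.
Qed.

Lemma size_remV1 la mu : size (remV1 la mu) = size la.
Proof. by rewrite /remV1 size_map size_iota. Qed.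

Lemma nth_remV1 la mu i : nth 0 (remV1 la mu) i =
  if nth 0 mu i < nth 0 la i then (nth 0 la i).-1 else nth 0 la i.
Proof.
case: (ltnP i (size la)) => h.
  by rewrite /remV1 (nth_map 0) ?size_iota // nth_iota.
rewrite (@nth_default _ 0 (remV1 la mu)) ?size_remV1 // (@nth_default _ 0 la) //; by case: ifP.
Qed.

Lemma remV1_ge la mu : (forall i, nth 0 mu i <= nth 0 la i) ->
  forall i, nth 0 mu i <= nth 0 (remV1 la mu) i.
Proof. move=> H i; rewrite nth_remV1; case: ifP => //; lia. Qed.

Lemma maxl_remV1 la mu : maxl (remV1 la mu) <= maxl la.
Proof.
apply: maxl_le => x /mapP[i _ ->].
apply: leq_trans (nth_le_maxl la i); case: ifP => //; lia.
Qed.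

Lemma in_skew_remV1 la mu i j : in_skew (remV1 la mu) mu i j -> in_skew la mu i j.
Proof. rewrite /in_skew nth_remV1; case: ifP => //; lia. Qed.

Lemma row_len_remV1 la mu i :
  row_len (remV1 la mu) mu i + (nth 0 mu i < nth 0 la i) = row_len la mu i.
Proof. rewrite /row_len nth_remV1; case: ifP => /= h; lia. Qed.

Lemma row_split la mu i X (P : nat -> bool) : nth 0 mu i <= nth 0 la i -> nth 0 la i <= X ->
  \sum_(j <- iota 0 X) (in_skew la mu i j && P j) =
  \sum_(j <- iota 0 X) (in_skew (remV1 la mu) mu i j && P j) +
  ((nth 0 mu i < nth 0 la i) && P (nth 0 la i).-1).
Proof.
move=> h1 h2.
have h1' : nth 0 mu i <= nth 0 (remV1 la mu) i.
  by rewrite nth_remV1; case: ifP => //; lia.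
have h2' : nth 0 (remV1 la mu) i <= X.
  by rewrite nth_remV1; case: ifP => //; lia.
rewrite (row_sumP P h1 h2) (row_sumP P h1' h2') /row_len nth_remV1.
case: ifP => h /=; last by rewrite addn0.
have e : nth 0 la i - nth 0 mu i = ((nth 0 la i).-1 - nth 0 mu i) + 1 by lia.
rewrite e iotaD big_cat /= big_cons big_nil addn0.
by have -> : nth 0 mu i + ((nth 0 la i).-1 - nth 0 mu i) = (nth 0 la i).-1 by lia.
Qed.

Lemma nrowsE la mu : nrows la mu = \sum_(i <- iota 0 (size la)) (nth 0 mu i < nth 0 la i).
Proof. by rewrite /nrows count_big. Qed.

Lemma cells_remV1 la mu : cells la mu = cells (remV1 la mu) mu + nrows la mu.
Proof.
rewrite /cells nrowsE size_remV1 -big_split /=.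
by apply: eq_bigr => i _; rewrite row_len_remV1.
Qed.

Lemma w1_rows la mu k : skew_shape la mu ->
  sumn (take k (wvec (remV1 la mu) mu)) <=
  \sum_(i <- iota 0 (size la)) minn (row_len (remV1 la mu) mu i) k.
Proof.
move=> sk; have sk3 := sk.2.2; have ge := remV1_ge sk3.
apply: wvec_bound => J uJ sJ szJ.
rewrite -(size_remV1 la mu).
apply: leq_trans (colbound (nI := size (remV1 la mu)) (nJ := maxl (remV1 la mu))
         (lab := fun i j => i) (L := iota 0 (size (remV1 la mu))) (iota_uniq _ _) uJ sJ szJ _ _) _.
- by move=> i i' j _ _ _ _.
- move=> i j hi _; change (i \in iota 0 (size (remV1 la mu))); by rewrite mem_iota hi.
- rewrite big_seq [X in _ <= X]big_seq; apply: leq_sum => i; rewrite mem_iota => /andP[_ hi].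
  rewrite (bigD1_seq i) ?mem_iota ?iota_uniq //=.
  rewrite [X in minn (_ + X) _]big1; last first.
    move=> i' hi'; rewrite big1 // => j _; by rewrite (negbTE hi') andbF.
  rewrite addn0.
  under eq_bigr => j _ do rewrite eqxx andbT.
  by rewrite row_sum // nth_le_maxl.
Qed.

Lemma head_row la mu T i v : 0 < v -> head 0 (rev (rowseq la mu T i)) = v ->
  (nth 0 mu i < nth 0 la i) && (T i (nth 0 la i).-1 == v).
Proof.
rewrite /rowseq /row_len.
case e : (nth 0 la i - nth 0 mu i) => [|n] hv.
  by rewrite /= => h; rewrite -h in hv.
have -> : n.+1 = n + 1 by lia.
rewrite iotaD map_cat rev_cat /=.
have -> : nth 0 mu i + n = (nth 0 la i).-1 by lia.
move=> ->; rewrite eqxx andbT; lia.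
Qed.

Lemma w1_nu la mu nu T k : skew_shape la mu -> is_part nu ->
  LR_tableau la mu nu T -> size nu = nrows la mu ->
  nrows la mu + sumn (take k (wvec (remV1 la mu) mu)) <= sumn (take k.+1 (conj nu)).
Proof.
move=> sk pnu [Hrow [Hcol [Hall [Hcnt Hlat]]]] hsz.
have sk3 := sk.2.2; have ge := remV1_ge sk3.
have nupos : all (fun x => 0 < x) nu by case/andP: pnu.
set word := read_word la mu T in Hall Hcnt Hlat.
rewrite conj_take.
have -> : \sum_(x <- nu) minn x k.+1 = size nu + \sum_(x <- nu) minn x.-1 k.
  rewrite -sum1_size -big_split /=; apply: eq_big_seq => x xn.
  have := allP nupos x xn; lia.
rewrite hsz leq_add2l (sum_nu (fun x => minn x.-1 k) Hcnt).
apply: wvec_bound => J uJ sJ szJ.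
have sJ' : {subset J <= iota 0 (maxl la)}.
  move=> z /sJ; rewrite !mem_iota /=; have := maxl_remV1 la mu; lia.
apply: leq_trans (colbound (nI := size (remV1 la mu)) (nJ := maxl la) (lab := T)
     (L := iota 1 (size nu)) (iota_uniq _ _) uJ sJ' szJ _ _) _.
- move=> i i' j _ _ h1 h2; apply: (col_inj sk Hcol); exact: in_skew_remV1.
- move=> i j _ h; have := allP Hall _ (mem_word T (in_skew_remV1 h)).
  rewrite mem_iota; lia.
- rewrite /index_iota subn1 /= big_seq [X in _ <= X]big_seq.
  apply: leq_sum => v; rewrite mem_iota => /andP[hv1 hv2].
  suff : \sum_(i <- iota 0 (size (remV1 la mu))) \sum_(j <- iota 0 (maxl la))
            (in_skew (remV1 la mu) mu i j && (T i j == v)) < count_mem v word.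
    move: (\sum_(i <- _) _) (count_mem v word) => a b; lia.
  rewrite /word (count_word T v sk3) size_remV1.
  under [X in _ < X]eq_bigr => i _ do rewrite (row_split _ (sk3 i) (nth_le_maxl la i)).
  rewrite big_split /= -[X in X < _]addn0 ltn_add2l.
  (* some row has rightmost entry v *)
  have vword : v \in word.
    rewrite -count_gt0_mem.
    have -> : v = (v.-1).+1 by lia.
    rewrite Hcnt; apply: (allP nupos); apply: mem_nth.
    by case: (v) hv1 hv2 => // n _ /=; rewrite add1n ltnS.
  have [b bin hb] := head_first (W := [::]) (blocks_sorted Hrow) Hlat
       ltac:(by apply/allP => x /(allP Hall) /andP[]) ltac:(by []) vword.
  case/mapP: bin => i iin eb; subst b.
  have := head_row hv1 hb => hrow.
  rewrite (bigD1_seq i) ?iota_uniq //= hrow; lia.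
Qed.

Lemma take_sum (s : seq nat) m :
  sumn (take m s) = \sum_(0 <= p < minn m (size s)) nth 0 s p.
Proof.
rewrite -{1}(mkseq_nth 0 s) /mkseq -map_take take_iota sumn_big.
by rewrite /index_iota subn0.
Qed.

Lemma sorted_step (s : seq nat) p : sorted geq s -> p.+1 < size s ->
  nth 0 s p.+1 <= nth 0 s p.
Proof. by move=> /(sortedP 0) H h; apply: H. Qed.

Lemma ab_exists (s : seq nat) I J : sorted geq s -> I < J -> J < size s ->
  nth 0 s J + 2 <= nth 0 s I ->
  exists a b, [/\ I <= a < b, b <= J, nth 0 s a.+1 < nth 0 s a,
                  nth 0 s b < nth 0 s b.-1 & nth 0 s b + 2 <= nth 0 s a].
Proof.
move=> ss.
suff H : forall n I J, J - I <= n -> I < J -> J < size s ->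
  nth 0 s J + 2 <= nth 0 s I ->
  exists a b, [/\ I <= a < b, b <= J, nth 0 s a.+1 < nth 0 s a,
                  nth 0 s b < nth 0 s b.-1 & nth 0 s b + 2 <= nth 0 s a].
  by move=> h1 h2 h3; apply: (H (J - I)).
elim => [|n IH] {}I {}J hn h1 h2 h3; first lia.
have stI := sorted_step (p := I) ss ltac:(lia).
have [hI|hI|hI] := ltngtP (nth 0 s I.+1) (nth 0 s I); last first.
- have hIJ : I.+1 < J.
    case: (ltngtP I.+1 J) => // e; [lia | subst J; lia].
  have [a [b [/andP[? ?] ? ? ? ?]]] := IH I.+1 J ltac:(lia) hIJ h2 ltac:(lia).
  exists a, b; split => //; try lia; apply/andP; split; lia.
- lia.
have hJ1 : 0 < J by lia.
have stJ := sorted_step (p := J.-1) ss ltac:(rewrite prednK //).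
rewrite prednK // in stJ.
have [hJ|hJ|hJ] := ltngtP (nth 0 s J) (nth 0 s J.-1).
- exists I, J; split => //; try lia; apply/andP; split; lia.
- lia.
- have hIJ : I < J.-1.
    case: (ltngtP I J.-1) => // e; [lia | rewrite -e in hJ; lia].
  have [a [b [/andP[? ?] ? ? ? ?]]] := IH I J.-1 ltac:(lia) hIJ ltac:(lia) ltac:(by rewrite -hJ).
  exists a, b; split => //; try lia; apply/andP; split; lia.
Qed.

Lemma leq_sum_nat m n (F G : nat -> nat) :
  (forall p, m <= p < n -> F p <= G p) -> \sum_(m <= p < n) F p <= \sum_(m <= p < n) G p.
Proof.
move=> H; rewrite big_nat_cond [X in _ <= X]big_nat_cond.
apply: leq_sum => p /andP[hp _]; exact: H.
Qed.

Lemma sum_ind a K : \sum_(0 <= p < K) (p == a) = (a < K).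
Proof.
elim: K => [|K IH]; first by rewrite big_geq.
rewrite big_nat_recr //= IH; case: eqP => [->|]; lia.
Qed.

Lemma nth_sorted_mono (s : seq nat) i i' : sorted geq s -> i <= i' -> nth 0 s i' <= nth 0 s i.
Proof.
move=> sp h; case: (ltnP i' (size s)) => h'.
- apply: (sorted_leq_nth geq_trans geq_refl 0 sp) => //; rewrite inE /=; lia.
- by rewrite (nth_default _ h').
Qed.

Lemma sigma_eq n1 (w1 sg : seq nat) : sorted geq sg -> sorted geq w1 ->
  perm_eq sg (n1 :: w1) -> nth 0 sg 0 = n1 -> 0 < size sg -> sg = n1 :: w1.
Proof.
case: sg => [|x s'] //= sx sw px hx _; subst x; congr cons.
apply: (sorted_eq geq_trans geq_anti) => //; first exact: path_sorted sx.
by rewrite perm_cons in px.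
Qed.

Theorem mainTheorem9 (la mu : seq nat) (l i j : nat) :
  skew_shape la mu -> connected_skew la mu ->
  let w := wvec la mu in
  let r := size w in
  let n1 := nrows la mu in
  let w1 := wvec (remV1 la mu) mu in
  let sigma := sort geq (n1 :: w1) in
  3 <= l <= r ->
  (* sigma = (n1, wb_2, ..., wb_l, w_{l+1}, ..., w_r) *)
  size sigma = r ->
  nth1 sigma 1 = n1 ->
  (forall k, 2 <= k <= l -> nth1 sigma k <= nth1 w k) ->
  (forall k, l < k <= r -> nth1 sigma k = nth1 w k) ->
  0 < nth1 sigma l < nth1 w l ->
  2 <= i -> i < j -> j <= l ->
  nth1 sigma j + 2 <= nth1 sigma i ->
  nth1 sigma j < nth1 w j ->
  (forall rho, in_supp la mu rho -> in_interval la mu rho) /\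
  (exists rho, in_interval la mu rho /\ ~ in_supp la mu rho).
Proof.
move=> sk _ w r n1 w1 sigma /andP[hl3 hlr] hsz h1 hle heq /andP[hlpos hlt]
   hi2 hij hjl hgap _.
split; first by move=> rho; exact: supp_in_interval.
have sk3 := sk.2.2.
have ssig : sorted geq sigma by apply: sort_sorted; exact: geq_tot.
have sw1 : sorted geq w1 by apply: sort_sorted; exact: geq_tot.
have sigE : sigma = n1 :: w1.
  apply: sigma_eq => //; first by apply: permEl; exact: perm_sort.
  by rewrite hsz; lia.
have sumw : sumn w = cells la mu by apply: sumn_wvec.
have sumw1 : sumn w1 = cells (remV1 la mu) mu by apply: sumn_wvec; exact: remV1_ge.
have sumsig : sumn sigma = sumn w.
  by rewrite sigE /= sumw sumw1 (cells_remV1 la mu) addnC.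
pose ss p := nth 0 sigma p.
pose ws p := nth 0 w p.
have Fle : forall p, 1 <= p -> p < r -> ss p <= ws p.
  move=> p hp1 hpr; case: (ltnP p l) => hp.
  - by have := hle p.+1 ltac:(lia).
  - by have := heq p.+1 ltac:(lia); rewrite /nth1 /ss /ws /= => ->.
have Flt : ss l.-1 < ws l.-1 by [].
have tot : \sum_(0 <= p < r) ss p = \sum_(0 <= p < r) ws p.
  have := take_sum sigma r; have := take_sum w r.
  rewrite !take_oversize ?hsz // minnn => <- <-; exact: sumsig.
have pref : forall K, 1 <= K <= r ->
    \sum_(0 <= p < K) ws p + (K < l) <= \sum_(0 <= p < K) ss p.
  move=> K /andP[hK1 hKr].
  move: tot; rewrite (@big_cat_nat _ _ _ K 0 r) // (@big_cat_nat _ _ _ K 0 r) //.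
  suff : \sum_(K <= p < r) ss p + (K < l) <= \sum_(K <= p < r) ws p.
    move: (\sum_(0 <= p < K) ss p) (\sum_(0 <= p < K) ws p)
          (\sum_(K <= p < r) ss p) (\sum_(K <= p < r) ws p) => A B C D /=; lia.
  case: (ltnP K l) => hKl /=; last first.
    rewrite addn0; apply: leq_sum_nat => p /andP[hp1 hp2]; apply: Fle; lia.
  rewrite (@big_cat_nat _ _ _ l.-1 K r) ?(@big_cat_nat _ _ _ l.-1 K r) //; try lia.
  rewrite (@big_ltn _ _ _ l.-1 r) ?(@big_ltn _ _ _ l.-1 r); try lia.
  rewrite prednK; last lia.
  have e1 : \sum_(K <= p < l.-1) ss p <= \sum_(K <= p < l.-1) ws p.
    apply: leq_sum_nat => p /andP[hp1 hp2]; apply: Fle; lia.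
  have e2 : \sum_(l <= p < r) ss p <= \sum_(l <= p < r) ws p.
    apply: leq_sum_nat => p /andP[hp1 hp2]; apply: Fle; lia.
  move: e1 e2 Flt; move: (\sum_(K <= p < l.-1) ss p) (\sum_(K <= p < l.-1) ws p)
          (\sum_(l <= p < r) ss p) (\sum_(l <= p < r) ws p) (ss l.-1) (ws l.-1).
  move=> A B C D E G /=. lia.
have hI1 : i.-1 < j.-1 by lia.
have hJr : j.-1 < size sigma by rewrite hsz; lia.
have [a [b [/andP[ha1 hab] hbJ Fa Fb Fab]]] := ab_exists ssig hI1 hJr hgap.
have ha1' : 1 <= a by lia.
have hbl : b < l by lia.
have hbr : b < r by lia.
have sa1 : 1 <= ss a by rewrite /ss; lia.
have sa2 : 2 <= ss a by rewrite /ss; lia.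
pose f p := if p == a then ss p - 1 else if p == b then (ss p).+1 else ss p.
have fpt : forall p, f p + (p == a) = ss p + (p == b).
  move=> p; rewrite /f; case: (eqVneq p a) => [->|hpa].
  - have -> : (a == b) = false by apply/negbTE; lia.
    rewrite /=; lia.
  - case: (eqVneq p b) => [->|hpb] /=; lia.
have frel : forall K, \sum_(0 <= p < K) f p + (a < K) = \sum_(0 <= p < K) ss p + (b < K).
  move=> K; rewrite -!sum_ind -!big_split /=; apply: eq_bigr => p _; exact: fpt.
pose rho := mkseq f r.
have rhoP : forall m, sumn (take m rho) = \sum_(0 <= p < minn m r) f p.
  move=> m; rewrite take_sum size_mkseq; apply: eq_big_nat => p /andP[_ hp].
  rewrite nth_mkseq //; lia.
have sigP : forall m, sumn (take m sigma) = \sum_(0 <= p < minn m r) ss p.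
  by move=> m; rewrite take_sum hsz.
have wP : forall m, sumn (take m w) = \sum_(0 <= p < minn m r) ws p.
  by move=> m; rewrite take_sum.
have sigpos : forall p, p < r -> 0 < ss p.
  move=> p hp; case: p hp => [|p] hp.
  - have := nth_sorted_mono ssig (leq0n a); rewrite -/(ss a) -/(ss 0); lia.
  - rewrite /ss sigE /=.
    have : all (fun x => 0 < x) w1 by rewrite /w1 /wvec all_sort filter_all.
    move/allP; apply; apply: mem_nth.
    have := hsz; rewrite sigE /=; lia.
have rho_part : is_part rho.
  apply/andP; split.
  - apply/(sortedP 0) => q; rewrite size_mkseq => hq.
    rewrite !nth_mkseq //; try lia.
    have stq : ss q.+1 <= ss q by apply: sorted_step; rewrite ?hsz.
    move: Fa Fb Fab stq hab; rewrite /f -/(ss _) -/(ss _) -/(ss _) -/(ss _).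
    by repeat (case: eqP => ?); subst => /=; lia.
  - apply/allP => x /mapP[p]; rewrite mem_iota => /andP[_ hp] ->.
    have := sigpos p ltac:(lia); rewrite /f.
    case: eqP => [->|_]; first lia.
    by case: eqP => _; lia.
have sig_n : forall m, sumn (take m sigma) <= sumn (take m (nvec la mu)).
  move=> [|m]; first by rewrite take0.
  rewrite sigE /= nvec_take.
  apply: leq_trans (leq_add (leqnn n1) (w1_rows m sk)) _.
  rewrite /n1 nrowsE -big_split /=; apply: leq_sum => p _.
  have := row_len_remV1 la mu p; rewrite /row_len.
  move: (nth 0 (remV1 la mu) p) (nth 0 mu p) (nth 0 la p) => x y z; lia.
exists rho; split.
- split => //; split.
    have := rhoP r; have := frel r; have := sigP r.
    rewrite !take_oversize ?size_mkseq ?hsz // minnn => e1 e2 e3.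
    rewrite e3 -sumsig e1; move: e2.
    move: (\sum_(0 <= p < r) f p) (\sum_(0 <= p < r) ss p) => A B; lia.
  split.
  + move=> m; rewrite rhoP wP.
    have hK : minn m r <= r by apply: geq_minr.
    have := frel (minn m r).
    case: (posnP (minn m r)) => hK0.
      by rewrite hK0 !big_geq.
    have := pref (minn m r) ltac:(lia).
    move: (\sum_(0 <= p < minn m r) f p) (\sum_(0 <= p < minn m r) ss p)
      (\sum_(0 <= p < minn m r) ws p) => A B C; lia.
  + move=> m; apply: leq_trans (sig_n m); rewrite rhoP sigP.
    have := frel (minn m r).
    move: (\sum_(0 <= p < minn m r) f p) (\sum_(0 <= p < minn m r) ss p) => A B; lia.
- case=> nu [pnu [[T LR] erho]].
  have e0 : nth 0 rho 0 = n1.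
    rewrite nth_mkseq; last lia.
    rewrite /f.
    have -> : (0 == a) = false by apply/negbTE; lia.
    have -> : (0 == b) = false by apply/negbTE; lia.
    by move: h1; rewrite /nth1.
  have hsz1 : size nu = nrows la mu.
    rewrite -conj_nth0; last by case/andP: pnu.
    by rewrite -erho e0.
  have := w1_nu a sk pnu LR hsz1.
  rewrite -erho rhoP.
  have := sigP a.+1; rewrite sigE /= => /eqP; rewrite -/w1 -/n1 eqn_leq => /andP[_].
  have := frel a.+1.
  have -> : minn a.+1 r = a.+1 by lia.
  move: (\sum_(0 <= p < a.+1) f p) (\sum_(0 <= p < a.+1) ss p) => A B.
  rewrite -/w1 -/n1; move: (sumn (take a w1)) => C; lia.
Qed.
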